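(* Let $\alpha > 1$ and let $H$ be a $k$-uniform hypergraph with $e$ edges. Then $\lambda_\alpha(H) \le (k!\,e)^{1-1/\alpha}$.
   Context: For a $k$-uniform hypergraph $H$ on $[n]$, $\tau_H(x,\dots,x) = k!\sum_{\{i_1,\dots,i_k\}\in E(H)} x_{i_1}\cdots x_{i_k}$ for $x\in\mathbb{R}^n$, and $\lambda_\alpha(H) = \max\{\tau_H(x,\dots,x) : \|x\|_\alpha = 1\}$, where $\|x\|_\alpha = (\sum_i |x_i|^\alpha)^{1/\alpha}$. *)

(* Defs.v *)
From HB Require Import structures.
From mathcomp Require Import all_boot all_order all_algebra.
From mathcomp Require Import all_classical all_reals all_analysis.
Set Implicit Arguments. Unset Strict Implicit. Unset Printing Implicit Defensive.
Import Order.TTheory GRing.Theory Num.Theory.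
Local Open Scope classical_set_scope.
Local Open Scope ring_scope.

Definition k_uniform (n k : nat) (E : {set {set 'I_n}}) : Prop :=
  forall A, A \in E -> #|A| = k.

Definition tauH (R : realType) (n k : nat) (E : {set {set 'I_n}})
  (x : 'I_n -> R) : R :=
  (k`!)%:R * \sum_(A in E) \prod_(i in A) x i.

Definition alpha_norm (R : realType) (n : nat) (alpha : R) (x : 'I_n -> R) : R :=
  (\sum_(i < n) `|x i| `^ alpha) `^ (alpha^-1).

(* lambda_alpha(H) = max { tau_H(x) : ||x||_alpha = 1 } (taken as the sup,
   which is the max since the set is attained on a compact sphere) *)
Definition lambda_alpha (R : realType) (n k : nat) (E : {set {set 'I_n}})
  (alpha : R) : R :=
  sup [set tauH k E x | x in [set x : 'I_n -> R | alpha_norm alpha x = 1]].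

(* Main.v *)
Require Import Defs.
From HB Require Import structures.
From mathcomp Require Import all_boot all_order all_algebra.
From mathcomp Require Import all_classical all_reals all_analysis.
From mathcomp Require Import ring.
Import Order.TTheory GRing.Theory Num.Theory.
Local Open Scope classical_set_scope.
Local Open Scope ring_scope.
Lemma esym_step (R : realType) (n k : nat) (z : 'I_n -> R) :
  (forall i, 0 <= z i) ->
  k.+1%:R * \sum_(A : {set 'I_n} | #|A| == k.+1) \prod_(i in A) z i <=
  (\sum_i z i) * \sum_(A : {set 'I_n} | #|A| == k) \prod_(i in A) z i.
Proof.
move=> z0.
have pz B : 0 <= \prod_(j in B) z j by apply: prodr_ge0.
rewrite mulr_sumr mulr_suml.
rewrite (_ : \sum_(A : {set 'I_n} | #|A| == k.+1) k.+1%:R * \prod_(i in A) z i = \sum_(A : {set 'I_n} | #|A| == k.+1) \sum_(i in A) (z i * \prod_(j in A :\ i) z j)); last first.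
  apply: eq_bigr => A /eqP cA.
  rewrite (_ : k.+1%:R * \prod_(i in A) z i = \sum_(i in A) \prod_(j in A) z j); last first.
    by rewrite sumr_const cA mulr_natl.
  apply: eq_bigr => i iA; rewrite (bigD1 i) //=.
congr (_ * _).
  by apply: eq_bigl => j; rewrite in_setD1 andbC.
under eq_bigr do rewrite big_mkcond /=.
rewrite exchange_big /=; apply: ler_sum => i _.
rewrite -big_mkcondr /=.
rewrite mulr_sumr.
rewrite (reindex_onto (fun B => i |: B) (fun A => A :\ i)) /=; last first.
  by move=> A /andP[_ iA]; rewrite finset.setD1K.
rewrite [X in _ <= X]big_mkcond [X in X <= _]big_mkcond /=.
apply: ler_sum => B _.
case: ifP => [/andP[/andP[c _] /eqP H]|_]; last first.
  by case: ifP => _ //; rewrite mulr_ge0.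
have iB : i \notin B by apply/negP => iB; move: (setD11 i (i |: B)); rewrite H iB.
move: c; rewrite cardsU1 iB add1n eqSS => ->.
by rewrite H.
Qed.

Lemma esym_bound (R : realType) (n k : nat) (z : 'I_n -> R) :
  (forall i, 0 <= z i) ->
  k`!%:R * \sum_(A : {set 'I_n} | #|A| == k) \prod_(i in A) z i <= (\sum_i z i) ^+ k.
Proof.
move=> z0.
have p0 : 0 <= \sum_i z i by apply: sumr_ge0.
elim: k => [|k IH].
  rewrite (eq_bigl (pred1 (finset.set0 : {set 'I_n}))); last by move=> A; rewrite /= cards_eq0.
  by rewrite big_pred1_eq finset.big_set0 fact0 mul1r expr0.
rewrite factS natrM -mulrA mulrCA.

apply: (le_trans (ler_wpM2l _ (@esym_step R n k z z0))) => //.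
by rewrite mulrCA exprS ler_wpM2l.
Qed.
Lemma powR_prod (R : realType) (n : nat) (A : {set 'I_n}) (f : 'I_n -> R) (r : R) :
  (forall i, 0 <= f i) ->
  (\prod_(i in A) f i) `^ r = \prod_(i in A) (f i `^ r).
Proof.
move=> f0.
suff : 0 <= \prod_(i in A) f i /\ (\prod_(i in A) f i) `^ r = \prod_(i in A) (f i `^ r) by case.
apply: (big_ind2 (fun a b => 0 <= a /\ a `^ r = b)).
- by rewrite powR1.
- move=> a1 b1 a2 b2 [a10 <-] [a20 <-]; split; first exact: mulr_ge0.
  by rewrite powRM.
- by move=> i _; split.
Qed.

Theorem lemma5 (R : realType) (n k : nat) (E : {set {set 'I_n}}) (alpha : R) :
  1 < alpha -> k_uniform k E ->
  lambda_alpha k E alpha <= ((k`!)%:R * (#|E|)%:R) `^ (1 - alpha^-1).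
Proof.
move=> a1 unif.
have a0 : 0 < alpha by apply: lt_trans a1.
rewrite /lambda_alpha.
set S := (X in sup X).
have [Sn0|S0] := pselect (S !=set0); last first.
  have -> : S = set0.
    apply/seteqP; split => y Sy //; by exfalso; apply: S0; exists y.
  by rewrite sup0 powR_ge0.
apply: ge_sup => // _ [x /= nx <-].
rewrite /tauH.
set z := fun i => `|x i| `^ alpha.
have z0 i : 0 <= z i by apply: powR_ge0.
have sz : \sum_i z i = 1.
  move: nx; rewrite /alpha_norm => nx.
  have s0 : 0 <= \sum_i z i by apply: sumr_ge0.
  have := congr1 (fun t => t `^ alpha) nx; rewrite /= -powRrM mulVf ?lt0r_neq0 //.
  by rewrite powRr1 // powR1.
have L := @esym_bound R n k z z0; rewrite sz expr1n in L.
have LE : (k`!)%:R * \sum_(A in E) \prod_(i in A) z i <= 1.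
  apply: le_trans L; apply: ler_wpM2l => //.
  rewrite (eq_bigl (fun A : {set 'I_n} => (#|A| == k) && (A \in E))); last first.
    by move=> A /=; case: (boolP (A \in E)) => AE; rewrite ?andbT ?andbF // (unif A AE) eqxx.
  rewrite big_mkcondr /=; apply: ler_sum => A _; case: ifP => _ //; exact: prodr_ge0.
set y := fun A : {set 'I_n} => \prod_(i in A) `|x i|.
have y0 A : 0 <= y A by apply: prodr_ge0.
have yz A : y A `^ alpha = \prod_(i in A) z i by rewrite powR_prod.
have kf0 : 0 < (k`!)%:R :> R by rewrite ltr0n fact_gt0.
apply: (@le_trans _ _ ((k`!)%:R * \sum_(A in E) y A)).
  apply: ler_wpM2l; first exact: ltW.
  apply: ler_sum => A _; rewrite /y -normr_prod; exact: ler_norm.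
have [E0|Epos] := eqVneq #|E| 0%N.
  rewrite big_pred0 ?mulr0 ?powR_ge0 //.
  by move=> A; apply/negbTE; move: E0 => /eqP; rewrite cards_eq0 => /eqP ->; rewrite finset.in_set0.
set w := (k`!)%:R * (#|E|)%:R.
have w0 : 0 < w by rewrite mulr_gt0 // ltr0n lt0n.
set c := w `^ alpha^-1.
have c0 : 0 < c by rewrite powR_gt0.
set q := (1 - alpha^-1)^-1.
have ia1 : alpha^-1 < 1 by rewrite invf_lt1.
have q0 : 0 < q by rewrite invr_gt0 subr_gt0.
have pq : alpha^-1 + q^-1 = 1 by rewrite invrK addrC subrK.
have cw : c `^ alpha = w by rewrite -powRrM mulVf ?lt0r_neq0 // powRr1 // ltW.
have key : \sum_(A in E) y A * c <= (#|E|)%:R.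
  apply: (@le_trans _ _ (\sum_(A in E) ((y A * c) `^ alpha / alpha + 1 `^ q / q))).
    apply: ler_sum => A _; rewrite -[X in X <= _]mulr1.
    by apply: conjugate_powR => //; rewrite mulr_ge0 // ltW.
  have H1 : \sum_(A in E) (y A * c) `^ alpha = w * \sum_(A in E) \prod_(i in A) z i.
    rewrite mulr_sumr; apply: eq_bigr => A _.
    by rewrite powRM ?(ltW c0) // cw yz mulrC.
  have H2 : w * \sum_(A in E) \prod_(i in A) z i <= (#|E|)%:R.
    rewrite /w mulrAC -[X in _ <= X]mul1r; by apply: ler_wpM2r.
  have -> : 1 `^ q = 1 by rewrite powR1.
  rewrite big_split /= -mulr_suml H1 sumr_const div1r invrK.
  apply: (@le_trans _ _ ((#|E|)%:R / alpha + (1 - alpha^-1) *+ #|E|)).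
    by rewrite lerD2r ler_wpM2r // invr_ge0 ltW.
  rewrite le_eqVlt; apply/orP; left; apply/eqP.
  by rewrite -[(1 - alpha^-1) *+ _]mulr_natr; ring.
rewrite -(ler_pM2r c0).
have -> : w `^ (1 - alpha^-1) * c = w.
  rewrite /c -powRD; last by rewrite (lt0r_neq0 w0) implybT.
  by rewrite subrK powRr1 // ltW.
rewrite -mulrA mulr_suml /w; apply: ler_wpM2l => //; exact: ltW.
Qed.
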